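(* Let $\Bbbk$ be a field with $\operatorname{char}\Bbbk\neq 2$, and let $H_4^{(-)}$ be the Lie algebra defined in the context, with basis $1,g,e,f$. Let $L$ be a three-dimensional non-abelian Lie subalgebra of $H_4^{(-)}$. Then $L=\operatorname{span}(\alpha 1+g,e,f)$ for some $\alpha\in\Bbbk$, or $L=\operatorname{span}(1,g+\gamma e,f)$ for some $\gamma\in\Bbbk$, or $L=\operatorname{span}(1,g+\gamma f,e)$ for some $\gamma\in\Bbbk$. If moreover $L$ is an ideal of $H_4^{(-)}$, then $L=I:=\Bbbk 1+\Bbbk e+\Bbbk f$ or $L=J_\alpha:=\Bbbk(\alpha 1+g)+\Bbbk e+\Bbbk f$ for some $\alpha\in\Bbbk$.
   Context: $H_4$ is the Sweedler algebra over $\Bbbk$: the 4-dimensional associative unital algebra generated by $g,x$ with relations $g^2=1$, $x^2=0$, $xg=-gx$, with basis $1,g,x,gx$. $H_4^{(-)}$ is the Lie algebra on the vector space $H_4$ with bracket $[a,b]=ab-ba$. Put $e=x+gx$ and $f=x-gx$; then $1,g,e,f$ is a basis of $H_4$ and $[1,g]=[1,e]=[1,f]=0$, $[g,e]=2e$, $[g,f]=-2f$, $[e,f]=0$. *)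

(* Defs.v *)
From HB Require Import structures.
From mathcomp Require Import all_boot all_order all_algebra.
Set Implicit Arguments. Unset Strict Implicit. Unset Printing Implicit Defensive.
Import GRing.Theory.
Local Open Scope ring_scope.

(* The Sweedler algebra H_4 over a field K, realized on the coordinate space
   'rV[K]_4 with respect to the basis (1, g, x, gx): the vector v stands for
   v_0 * 1 + v_1 * g + v_2 * x + v_3 * gx. *)
Definition H4 (K : fieldType) := 'rV[K]_4.

Definition h4 (K : fieldType) (a b c d : K) : H4 K :=
  \row_(i < 4) nth 0 [:: a; b; c; d] i.

(* Multiplication of H_4: determined by g^2 = 1, x^2 = 0, xg = -gx, i.e.
   g*g = 1, g*x = gx, x*g = -gx, g*gx = x, gx*g = -x, and all products of
   two elements from {x, gx} vanish. *)
Definition h4mul (K : fieldType) (u v : H4 K) : H4 K :=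
  let a0 := u 0 0 in let a1 := u 0 1 in let a2 := u 0 2 in let a3 := u 0 3 in
  let b0 := v 0 0 in let b1 := v 0 1 in let b2 := v 0 2 in let b3 := v 0 3 in
  h4 (a0 * b0 + a1 * b1)
     (a0 * b1 + a1 * b0)
     (a0 * b2 + a2 * b0 + a1 * b3 - a3 * b1)
     (a0 * b3 + a3 * b0 + a1 * b2 - a2 * b1).

Definition h4one (K : fieldType) : H4 K := h4 1 0 0 0.
Definition h4g   (K : fieldType) : H4 K := h4 0 1 0 0.
Definition h4x   (K : fieldType) : H4 K := h4 0 0 1 0.
Definition h4gx  (K : fieldType) : H4 K := h4 0 0 0 1.

Definition h4e (K : fieldType) : H4 K := h4x K + h4gx K.
Definition h4f (K : fieldType) : H4 K := h4x K - h4gx K.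

Definition h4br (K : fieldType) (u v : H4 K) : H4 K := h4mul u v - h4mul v u.

Definition lie_subalg (K : fieldType) (L : {vspace H4 K}) : Prop :=
  forall u v, u \in L -> v \in L -> h4br u v \in L.

Definition non_abelian (K : fieldType) (L : {vspace H4 K}) : Prop :=
  exists u v, [/\ u \in L, v \in L & h4br u v != 0].

Definition lie_ideal (K : fieldType) (L : {vspace H4 K}) : Prop :=
  forall u v, u \in L -> h4br v u \in L.

Definition span3 (K : fieldType) (a b c : H4 K) : {vspace H4 K} :=
  <<[:: a; b; c]>>%VS.

(* Main.v *)
Require Import Defs.
From HB Require Import structures.
From mathcomp Require Import all_boot all_order all_algebra.
From mathcomp Require Import ring.
Import GRing.Theory.
Set Implicit Arguments. Unset Strict Implicit. Unset Printing Implicit Defensive.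
Local Open Scope ring_scope.

Section H.
Variable K : fieldType.
Implicit Types a b c d k : K.

Lemma h4c0 a b c d : (h4 a b c d) 0 0 = a. Proof. by rewrite mxE. Qed.
Lemma h4c1 a b c d : (h4 a b c d) 0 1 = b. Proof. by rewrite mxE. Qed.
Lemma h4c2 a b c d : (h4 a b c d) 0 2 = c. Proof. by rewrite mxE. Qed.
Lemma h4c3 a b c d : (h4 a b c d) 0 3 = d. Proof. by rewrite mxE. Qed.

Lemma h4_surj (v : H4 K) : exists a b c d, v = h4 a b c d.
Proof.
exists (v 0 0), (v 0 1), (v 0 2), (v 0 3).
apply/matrixP => i0 i; rewrite !mxE (ord1 i0).
case: i => [[|[|[|[|i]]]] Hi] //=; try (by congr (v 0 _); apply/val_inj).
Qed.

Lemma h4D a b c d a' b' c' d' :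
  h4 a b c d + h4 a' b' c' d' = h4 (a + a') (b + b') (c + c') (d + d').
Proof. by apply/rowP => i; rewrite !mxE; case: i => [[|[|[|[|i]]]] Hi]. Qed.
Lemma h4N a b c d : - h4 a b c d = h4 (- a) (- b) (- c) (- d).
Proof. by apply/rowP => i; rewrite !mxE; case: i => [[|[|[|[|i]]]] Hi] //=; rewrite oppr0. Qed.
Lemma h4Z k a b c d : k *: h4 a b c d = h4 (k * a) (k * b) (k * c) (k * d).
Proof. by apply/rowP => i; rewrite !mxE; case: i => [[|[|[|[|i]]]] Hi] //=; rewrite mulr0. Qed.

Lemma h4br_E a b c d a' b' c' d' :
  h4br (h4 a b c d) (h4 a' b' c' d') =
  h4 0 0 (2 * (b * d' - d * b')) (2 * (b * c' - c * b')).
Proof.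
rewrite /h4br /h4mul !h4c0 !h4c1 !h4c2 !h4c3 h4N h4D.
congr h4; ring.
Qed.

Lemma h4_eq a b c d a' b' c' d' :
  a = a' -> b = b' -> c = c' -> d = d' -> h4 a b c d = h4 a' b' c' d'.
Proof. by move=> -> -> -> ->. Qed.

Lemma h4oneE : h4one K = h4 1 0 0 0. Proof. by []. Qed.
Lemma h4gE : h4g K = h4 0 1 0 0. Proof. by []. Qed.
Lemma h4eE : h4e K = h4 0 0 1 1.
Proof. by rewrite /h4e /h4x /h4gx h4D !addr0 !add0r. Qed.
Lemma h4fE : h4f K = h4 0 0 1 (-1).
Proof. by rewrite /h4f /h4x /h4gx h4N h4D !oppr0 !addr0 !add0r. Qed.
Lemma h40 : h4 0 0 0 0 = 0 :> H4 K.
Proof. by apply/matrixP => i0 i; rewrite !mxE; case: i => [[|[|[|[|i]]]] Hi]. Qed.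

Lemma dimH : \dim (fullv : {vspace H4 K}) = 4%N.
Proof. by rewrite dimvf dim_matrix. Qed.

Variable char2 : (2%:R : K) != 0.
Ltac h4s := rewrite ?h4oneE ?h4eE ?h4fE ?h4gE ?h4Z ?h4N ?h4D; apply h4_eq; field; exact char2.
Ltac h4r := rewrite ?h4oneE ?h4eE ?h4fE ?h4gE ?h4Z ?h4N ?h4D; apply h4_eq; ring.

Lemma span3_comb (x y z : H4 K) k1 k2 k3 :
  k1 *: x + k2 *: y + k3 *: z \in span3 x y z.
Proof.
apply: memvD; [apply: memvD|]; apply: memvZ; apply: memv_span;
  by rewrite !inE eqxx ?orbT.
Qed.

Lemma notin_scal (L : {vspace H4 K}) x k : x \notin L -> k *: x \in L -> k = 0.
Proof.
move=> Hx Hk; apply/eqP; apply/negPn/negP => Hk0; move/negP: Hx; apply.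
by rewrite -(scalerK Hk0 x) memvZ.
Qed.

Lemma decomp (L : {vspace H4 K}) (Hs : lie_subalg L) al p q
  (Hw : h4 al 1 p q \in L) a c d (Hu : h4 a 0 c d \in L) :
  [/\ a *: h4one K \in L, ((c + d) / 2) *: h4e K \in L
    & ((c - d) / 2) *: h4f K \in L].
Proof.
have A := Hs _ _ Hw Hu; have B := Hs _ _ Hw A.
rewrite !h4br_E in A B.
split.
- suff -> : a *: h4one K = h4 a 0 c d - (2^-1 * 2^-1) *: h4 0 0 (2 * (1 * (2 * (1 * c - p * 0)) - q * 0))
        (2 * (1 * (2 * (1 * d - q * 0)) - p * 0)) by rewrite memvB // memvZ.
  h4s.
- suff -> : ((c + d) / 2) *: h4e K = (2^-1 * 2^-1 * 2^-1) *: h4 0 0 (2 * (1 * (2 * (1 * c - p * 0)) - q * 0))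
        (2 * (1 * (2 * (1 * d - q * 0)) - p * 0)) + (2^-1 * 2^-1) *: h4 0 0 (2 * (1 * d - q * 0)) (2 * (1 * c - p * 0))
    by rewrite memvD // memvZ.
  h4s.
- suff -> : ((c - d) / 2) *: h4f K = (2^-1 * 2^-1 * 2^-1) *: h4 0 0 (2 * (1 * (2 * (1 * c - p * 0)) - q * 0))
        (2 * (1 * (2 * (1 * d - q * 0)) - p * 0)) - (2^-1 * 2^-1) *: h4 0 0 (2 * (1 * d - q * 0)) (2 * (1 * c - p * 0))
    by rewrite memvB // memvZ.
  h4s.
Qed.

Lemma key (L : {vspace H4 K}) (Hs : lie_subalg L) al p q
  (Hw : h4 al 1 p q \in L) v (Hv : v \in L) :
  exists b a ce cf,
   [/\ v = b *: h4 al 1 p q + a *: h4one K + ce *: h4e K + cf *: h4f K,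
       a *: h4one K \in L, ce *: h4e K \in L & cf *: h4f K \in L].
Proof.
move: Hv; have [v0 [v1 [v2 [v3 ->]]]] := h4_surj v => Hv.
have Hu : h4 (v0 - v1 * al) 0 (v2 - v1 * p) (v3 - v1 * q) \in L.
  suff -> : h4 (v0 - v1 * al) 0 (v2 - v1 * p) (v3 - v1 * q)
     = h4 v0 v1 v2 v3 - v1 *: h4 al 1 p q by rewrite memvB // memvZ.
  h4r.
have [H1 H2 H3] := decomp Hs Hw Hu.
exists v1, (v0 - v1 * al), ((v2 - v1 * p + (v3 - v1 * q)) / 2),
  ((v2 - v1 * p - (v3 - v1 * q)) / 2); split => //.
h4s.
Qed.

Lemma getw (L : {vspace H4 K}) : non_abelian L ->
  exists al p q, h4 al 1 p q \in L.
Proof.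
case=> u [v [Hu Hv Hne]].
move: Hu Hv Hne; have [u0 [u1 [u2 [u3 ->]]]] := h4_surj u;
have [v0 [v1 [v2 [v3 ->]]]] := h4_surj v => Hu Hv.
rewrite h4br_E.
have [Hu1|Hu1] := eqVneq u1 0.
  have [Hv1|Hv1] := eqVneq v1 0.
    by rewrite Hu1 Hv1 !mul0r !mulr0 !subrr mulr0 h40 eqxx.
  move=> _; exists (v0 / v1), (v2 / v1), (v3 / v1).
  suff -> : h4 (v0 / v1) 1 (v2 / v1) (v3 / v1) = v1^-1 *: h4 v0 v1 v2 v3 by rewrite memvZ.
  rewrite h4Z; apply h4_eq; rewrite ?mulVf // mulrC //.
move=> _; exists (u0 / u1), (u2 / u1), (u3 / u1).
suff -> : h4 (u0 / u1) 1 (u2 / u1) (u3 / u1) = u1^-1 *: h4 u0 u1 u2 u3 by rewrite memvZ.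
rewrite h4Z; apply h4_eq; rewrite ?mulVf // mulrC //.
Qed.


Lemma span2_comb (x y : H4 K) k1 k2 :
  k1 *: x + k2 *: y \in <<[:: x; y]>>%VS.
Proof.
apply: memvD; apply: memvZ; apply: memv_span; by rewrite !inE eqxx ?orbT.
Qed.
End H.

Theorem mainTheorem3 (K : fieldType) (char2 : (2%:R : K) != 0)
  (L : {vspace H4 K}) :
  \dim L = 3%N -> lie_subalg L -> non_abelian L ->
  ((exists alpha : K,
       L = span3 (alpha *: h4one K + h4g K) (h4e K) (h4f K))
   \/ (exists gamma : K,
       L = span3 (h4one K) (h4g K + gamma *: h4e K) (h4f K))
   \/ (exists gamma : K,
       L = span3 (h4one K) (h4g K + gamma *: h4f K) (h4e K)))
  /\
  (lie_ideal L ->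
     L = span3 (h4one K) (h4e K) (h4f K)
     \/ (exists alpha : K,
           L = span3 (alpha *: h4one K + h4g K) (h4e K) (h4f K))).
Proof.
Ltac h4s char2 := rewrite ?h4oneE ?h4eE ?h4fE ?h4gE; rewrite ?(h4Z, h4N, h4D, h4br_E);
   apply h4_eq; field; exact char2.
move=> dimL Hs Hna.
have [al [p [q Hw]]] := getw Hna.
have Kv := fun v (Hv : v \in L) => @key K char2 L Hs al p q Hw v Hv.
have HL3 : forall V : {vspace H4 K}, (L <= V)%VS -> (\dim V <= 3)%N -> L = V.
  by move=> V LV dV; apply/eqP; rewrite eqEdim LV dimL.
have Hsmall : forall t, (L <= <<[:: h4 al 1 p q; t]>>)%VS -> False.
  move=> t /dimvS; rewrite dimL => H; have := leq_trans H (dim_span _); by [].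
case: (boolP (h4one K \in L)) => H1; case: (boolP (h4e K \in L)) => He;
  case: (boolP (h4f K \in L)) => Hf.
- exfalso.
  have : (fullv <= L)%VS.
    apply/subvP => v _; have [v0 [v1 [v2 [v3 ->]]]] := h4_surj v.
    suff -> : h4 v0 v1 v2 v3 = v1 *: h4 al 1 p q + (v0 - v1 * al) *: h4one K
       + ((v2 - v1 * p + (v3 - v1 * q))/2) *: h4e K
       + ((v2 - v1 * p - (v3 - v1 * q))/2) *: h4f K.
      by apply: memvD; [apply: memvD; [apply: memvD|]|]; apply: memvZ.
    h4s char2.
  by move/dimvS; rewrite dimH dimL.
- have HL : L = span3 (h4one K) (h4g K + ((p - q) / 2) *: h4f K) (h4e K).
    apply: HL3; last exact: dim_span.
    apply/subvP => v /Kv [b [a [ce [cf [-> Ha Hce Hcf]]]]].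
    have cf0 := notin_scal Hf Hcf.
    suff -> : b *: h4 al 1 p q + a *: h4one K + ce *: h4e K + cf *: h4f K =
      (a + b * al) *: h4one K + b *: (h4g K + ((p - q) / 2) *: h4f K)
      + (ce + b * ((p + q) / 2)) *: h4e K by apply: span3_comb.
    rewrite cf0; h4s char2.
  split; first by right; right; exists ((p - q) / 2).
  move=> Hid; exfalso; move/negP: Hf; apply.
  have Hx : h4g K + ((p - q) / 2) *: h4f K \in L.
    suff -> : h4g K + ((p - q) / 2) *: h4f K =
      h4 al 1 p q - al *: h4one K - ((p + q) / 2) *: h4e K.
      by apply: memvB; [apply: memvB|]; rewrite // memvZ.
    h4s char2.
  suff -> : h4f K = 2^-1 *: h4br (h4f K) (h4g K + ((p - q) / 2) *: h4f K).
    by rewrite memvZ // Hid.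
  h4s char2.
- have HL : L = span3 (h4one K) (h4g K + ((p + q) / 2) *: h4e K) (h4f K).
    apply: HL3; last exact: dim_span.
    apply/subvP => v /Kv [b [a [ce [cf [-> Ha Hce Hcf]]]]].
    have ce0 := notin_scal He Hce.
    suff -> : b *: h4 al 1 p q + a *: h4one K + ce *: h4e K + cf *: h4f K =
      (a + b * al) *: h4one K + b *: (h4g K + ((p + q) / 2) *: h4e K)
      + (cf + b * ((p - q) / 2)) *: h4f K by apply: span3_comb.
    rewrite ce0; h4s char2.
  split; first by right; left; exists ((p + q) / 2).
  move=> Hid; exfalso; move/negP: He; apply.
  have Hx : h4g K + ((p + q) / 2) *: h4e K \in L.
    suff -> : h4g K + ((p + q) / 2) *: h4e K =
      h4 al 1 p q - al *: h4one K - ((p - q) / 2) *: h4f K.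
      by apply: memvB; [apply: memvB|]; rewrite // memvZ.
    h4s char2.
  suff -> : h4e K = - 2^-1 *: h4br (h4e K) (h4g K + ((p + q) / 2) *: h4e K).
    by rewrite memvZ // Hid.
  h4s char2.
- exfalso; apply: (Hsmall (h4one K)); apply/subvP => v /Kv [b [a [ce [cf [-> Ha Hce Hcf]]]]].
  rewrite (notin_scal He Hce) (notin_scal Hf Hcf) !scale0r !addr0.
  exact: span2_comb.
- have HL : L = span3 (al *: h4one K + h4g K) (h4e K) (h4f K).
    apply: HL3; last exact: dim_span.
    apply/subvP => v /Kv [b [a [ce [cf [-> Ha Hce Hcf]]]]].
    have a0 := notin_scal H1 Ha.
    suff -> : b *: h4 al 1 p q + a *: h4one K + ce *: h4e K + cf *: h4f K =
      b *: (al *: h4one K + h4g K) + (ce + b * ((p + q) / 2)) *: h4e K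
      + (cf + b * ((p - q) / 2)) *: h4f K by apply: span3_comb.
    rewrite a0; h4s char2.
  split; first by left; exists al.
  by move=> _; right; exists al.
- exfalso; apply: (Hsmall (h4e K)); apply/subvP => v /Kv [b [a [ce [cf [-> Ha Hce Hcf]]]]].
  rewrite (notin_scal H1 Ha) (notin_scal Hf Hcf) !scale0r !addr0.
  exact: span2_comb.
- exfalso; apply: (Hsmall (h4f K)); apply/subvP => v /Kv [b [a [ce [cf [-> Ha Hce Hcf]]]]].
  rewrite (notin_scal H1 Ha) (notin_scal He Hce) !scale0r !addr0.
  exact: span2_comb.
- exfalso; apply: (Hsmall (h4f K)); apply/subvP => v /Kv [b [a [ce [cf [-> Ha Hce Hcf]]]]].
  rewrite (notin_scal H1 Ha) (notin_scal He Hce) (notin_scal Hf Hcf) !scale0r !addr0.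
  rewrite -[X in X \in _]addr0 -(scale0r (h4f K)).
  exact: span2_comb.
Qed.
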